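(* Let $\mathcal I,\mathcal J$ be ideals on $\omega$ with $\mathcal I\subseteq\mathcal J$. For every cardinal $\kappa$ there exists a Hausdorff compact (hence normal) space $X$ with $|X|=\kappa$ such that for every sequence $(f_n)$ in $\mathcal C(X)$, if $(f_n)$ is $\mathcal I$-pointwise convergent to $0$ then $(f_n)$ is $\mathcal J$-$\sigma$-uniformly convergent to $0$.
   Context: An ideal on $\omega$ is a family $\mathcal I\subseteq\mathcal P(\omega)$ closed under finite unions and subsets, containing all finite sets, with $\omega\notin\mathcal I$. A real sequence $(a_n)$ is $\mathcal I$-convergent to $0$ if $\{n:|a_n|\ge\varepsilon\}\in\mathcal I$ for all $\varepsilon>0$. For a sequence $(f_n)$ of real functions on a set $X$: $\mathcal I$-pointwise convergence to $0$ means $(f_n(x))$ is $\mathcal I$-convergent to $0$ for each $x$; $\mathcal J$-uniform means $\{n:\exists x\in X\,(|f_n(x)|\ge\varepsilon)\}\in\mathcal J$ for each $\varepsilon>0$; $\mathcal J$-$\sigma$-uniform means $X=\bigcup_{k\in\omega}X_k$ with $(f_n\restriction X_k)$ $\mathcal J$-uniformly convergent to $0$ for each $k$. $\mathcal C(X)$ = continuous real functions on $X$. *)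

(* Defs.v *)
From mathcomp Require Import all_boot all_order all_algebra.
From mathcomp Require Import all_classical all_reals all_analysis.
Set Implicit Arguments. Unset Strict Implicit. Unset Printing Implicit Defensive.
Import Order.TTheory GRing.Theory Num.Theory.
Local Open Scope classical_set_scope.
Local Open Scope ring_scope.

Definition is_ideal (I : set (set nat)) : Prop :=
  [/\ (forall A B, I A -> I B -> I (A `|` B)),
      (forall A B, B `<=` A -> I A -> I B),
      (forall A, finite_set A -> I A) &
      ~ I setT].

Definition Iconv0 (R : realType) (I : set (set nat)) (a : nat -> R) : Prop :=
  forall eps : R, 0 < eps -> I [set n | eps <= `|a n|].

Definition Ipointwise0 (R : realType) (X : Type) (I : set (set nat))
    (f : nat -> X -> R) : Prop :=
  forall x : X, Iconv0 I (fun n => f n x).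

Definition Juniform0_on (R : realType) (X : Type) (J : set (set nat))
    (f : nat -> X -> R) (Y : set X) : Prop :=
  forall eps : R, 0 < eps -> J [set n | exists x, Y x /\ eps <= `|f n x|].

Definition Jsigma_uniform0 (R : realType) (X : Type) (J : set (set nat))
    (f : nat -> X -> R) : Prop :=
  exists Xk : nat -> set X,
    \bigcup_k Xk k = setT /\ forall k, Juniform0_on J f (Xk k).

(* Main.v *)
Require Import Defs.
From mathcomp Require Import all_boot all_order all_algebra.
From mathcomp Require Import all_classical all_reals all_analysis.
Import Order.TTheory GRing.Theory Num.Theory.
Local Open Scope classical_set_scope.
Local Open Scope ring_scope.
Lemma ideal_finU (J : set (set nat)) (hJ : is_ideal J) (T : Type) (Y : set T)
  (A : T -> set nat) : finite_set Y -> (forall x, Y x -> J (A x)) ->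
  J (\bigcup_(x in Y) A x).
Proof.
case: hJ => hU hS hF _.
elim/Pchoice: T => T in Y A *.
move=> /finite_fsetP[F ->{Y}] HA.
suff H : forall s : seq T, (forall x, x \in s -> J (A x)) ->
   J (\bigcup_(x in [set x | x \in s]) A x).
  have := H (finmap.enum_fset F) HA.
  by apply: hS => n [x /= xF Ax]; exists x.
elim => [_|a s IH Hs].
  by apply: hF; apply: sub_finite_set (finite_set0 _) => n [x].
apply: (hS (A a `|` \bigcup_(x in [set x | x \in s]) A x)).
  move=> n [x /=]; rewrite inE => /orP[/eqP->|xs] Ax; [by left|right; by exists x].
apply: hU; first by apply: Hs; rewrite inE eqxx.
by apply: IH => x xs; apply: Hs; rewrite inE xs orbT.
Qed.
Lemma key (R : realType) (I J : set (set nat))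
  (hI : is_ideal I) (hJ : is_ideal J) (hIJ : I `<=` J) (X : Type) (p : X)
  (f : nat -> X -> R)
  (hfin : forall n (e : R), 0 < e -> finite_set [set x | e <= `|f n x - f n p|]) :
  Ipointwise0 I f -> Jsigma_uniform0 J f.
Proof.
move=> hpw.
exists (fun k => if k is k'.+1 then
   [set x | exists2 n, (n <= k')%N & (k'.+1%:R)^-1 <= `|f n x - f n p|]
   else [set x | forall n, f n x = f n p]).
split.
  apply/seteqP; split => // x _.
  have [h|h] := pselect (forall n, f n x = f n p); first by exists 0%N.
  move/existsNP: h => [n hn].
  set d := `|f n x - f n p|.
  have d0 : 0 < d by rewrite normr_gt0 subr_eq0; apply/eqP.
  pose m := Num.truncn (d^-1).
  exists (maxn n m).+1 => //=; exists n; first exact: leq_maxl.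
  have h1 : d^-1 < m.+1%:R by exact: truncnS_gt.
  have h2 : (m.+1%:R)^-1 <= d.
    rewrite invf_ple ?posrE ?ltr0Sn //; exact: ltW.
  apply: le_trans h2; rewrite lef_pV2 ?posrE ?ltr0Sn // ler_nat ltnS; exact: leq_maxr.
case: (hI) => _ hIS _ _; case: (hJ) => _ hJS _ _.
move=> [|k] eps eps0.
  apply: hIJ; apply: hIS (hpw p eps eps0) => n [x [/= hx]]; by rewrite hx.
apply: hJS (@ideal_finU J hJ X [set x | exists2 n, (n <= k)%N & (k.+1%:R)^-1 <= `|f n x - f n p|]
   (fun x => [set n | eps <= `|f n x|]) _ _).
- by move=> n [x [hx he]]; exists x.
- apply: sub_finite_set (bigcup_finite (D := `I_k.+1)
     (F := fun n => [set x | (k.+1%:R)^-1 <= `|f n x - f n p|]) (finite_II _) _).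
    by move=> x [n nk hn]; exists n => //=.
  by move=> n _; apply: hfin; rewrite invr_gt0 ltr0Sn.
- by move=> x _; apply: hIJ; apply: hpw.
Qed.
Section S.
Variable (K' : choiceType).
Let T := discrete_topology K'.

Lemma disc_lc : locally_compact [set: T].
Proof.
move=> x _; rewrite withinET; exists [set x]; first exact: discrete_set1.
split; [exact: compact_set1 | exact: discrete_closed].
Qed.

Let X := one_point_compactification T.

Lemma opc_hausdorff : hausdorff_space X.
Proof. apply: one_point_compactification_hausdorff; [exact: disc_lc|exact: discrete_hausdorff]. Qed.

Lemma opc_img_finite (C : set T) : compact C -> finite_set (Some @` C : set X).
Proof.
move=> cC.
have cSC : compact (Some @` C : set X).
  apply: continuous_compact => //; apply: continuous_subspaceT.
  exact: one_point_compactification_some_continuous.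
move: cSC; rewrite compact_cover => cSC.
have op : forall i, (Some @` C : set X) i -> open [set i].
  move=> i [y Cy <-]; rewrite -image_set1.
  exact/one_point_compactification_open_some/discrete_open.
have [D' _ HD] := cSC X (Some @` C) (fun x => [set x]) op
  (fun x Cx => ex_intro2 _ _ x Cx erefl).
apply: sub_finite_set (finite_fset D') => x /HD [i /= iD ->]; exact: iD.
Qed.

Lemma opc_fin (R : realType) (f : X -> R) : continuous (f : X -> R^o) ->
  forall e : R, 0 < e -> finite_set [set x | e <= `|f x - f None|].
Proof.
move=> cf e e0.
have /cvgr_dist_lt/(_ e e0) := cf None.
case=> C [cC clC] HC.
apply: (sub_finite_set _ (@opc_img_finite C cC)).
case=> [y|] /=; last by rewrite subrr normr0 leNgt e0.
move=> hy; exists y => //; apply: contrapT => nCy.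
have := HC (Some y) (or_introl (ex_intro2 _ _ y nCy erefl)).
by rewrite /= distrC ltNge hy.
Qed.
End S.
Theorem theorem6p3 (R : realType) (I J : set (set nat))
  (hI : is_ideal I) (hJ : is_ideal J) (hIJ : I `<=` J) (K : Type) :
  exists (X : topologicalType) (g : X -> K),
    [/\ bijective g, hausdorff_space X, compact [set: X] &
      forall f : nat -> X -> R,
        (forall n, continuous (f n : X -> R^o)) ->
        Ipointwise0 I f -> Jsigma_uniform0 J f].
Proof.
have [[k0]|hK] := pselect (inhabited K); last first.
  exists (discrete_topology {classic K}), id; split.
  - by exists id.
  - exact: discrete_hausdorff.
  - have -> : [set: discrete_topology {classic K}] = set0.
      by apply/seteqP; split => // x; exfalso; apply: hK; constructor.
    exact: compact0.
  - move=> f _ _; exists (fun _ => setT); split.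
      by apply/seteqP; split => // x _; exists 0%N.
    move=> _ eps _; case: hJ => _ _ hF _; apply: hF.
    apply: sub_finite_set (finite_set0 nat) => n [x].
    by exfalso; apply: hK; constructor.
pose K' := {classic {x : K | x <> k0}}.
pose X := one_point_compactification (discrete_topology K').
exists X, (fun o : X => if o is Some x then proj1_sig x else k0); split.
- exists (fun y => match pselect (y = k0) with left _ => None
                  | right H => Some (exist _ y H : K') end).
    case=> [[y hy]|] /=.
      case: pselect => // H; congr Some; congr exist; exact: Prop_irrelevance.
    by case: pselect.
  by move=> y; case: pselect => /= [->|].
- exact: opc_hausdorff.
- exact: one_point_compactification_compact.
- move=> f cf hpw; apply: (@key R I J hI hJ hIJ X None) => // n e e0.
  exact: opc_fin.
Qed.
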